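(* Let $\mathcal{H}=(\mathcal{V},\mathcal{E})$ be a $3$-uniform Berge-$K_4$-saturated hypergraph and let $u,v\in\mathcal{V}$ be distinct. If $\mathcal{T}$ can be added on $(u,v)$, then for every positive integer $k$, $k$ copies of $\mathcal{T}$ can be added on $(u,v)$ simultaneously; that is, the hypergraph obtained from $\mathcal{H}$ by adding $2k$ new vertices $a_1^i,a_2^i$ ($1\le i\le k$) and the $2k$ hyperedges $a_1^ia_2^iu,\ a_1^ia_2^iv$ ($1\le i\le k$) is Berge-$K_4$-saturated. Moreover, it is impossible to add two copies of $\mathcal{T}$ simultaneously on two distinct pairs of vertices of $\mathcal{V}$: if $(u,v)\neq(u',v')$ are distinct pairs of vertices of $\mathcal V$, the hypergraph obtained from $\mathcal{H}$ by adding new vertices $a_1,a_2,a_3,a_4$ and hyperedges $a_1a_2u,a_1a_2v,a_3a_4u',a_3a_4v'$ is not Berge-$K_4$-saturated.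
   Context: A $3$-graph has all hyperedges of size $3$. A $3$-graph contains a Berge-$K_4$ if there are $4$ distinct vertices and $6$ distinct hyperedges, one containing each of the $6$ pairs of these vertices. A $3$-graph $\mathcal{H}$ is Berge-$K_4$-saturated if it contains no Berge-$K_4$, but for every $3$-set $e$ of vertices with $e\notin E(\mathcal{H})$, $\mathcal{H}+e$ contains a Berge-$K_4$. $\mathcal{T}$ denotes the hypergraph on $\{a_1,a_2,x_1,x_2\}$ with hyperedges $a_1a_2x_1,a_1a_2x_2$. We say $\mathcal{T}$ can be added on $(u,v)$ if the hypergraph obtained from $\mathcal{H}$ by adding two new vertices $a_1,a_2$ and the hyperedges $a_1a_2u,a_1a_2v$ (i.e. identifying $x_1,x_2$ with $u,v$) is Berge-$K_4$-saturated. *)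

(* Defs.v *)
From mathcomp Require Import all_boot.
Set Implicit Arguments. Unset Strict Implicit. Unset Printing Implicit Defensive.

Definition uniform3 (V : finType) (E : {set {set V}}) : Prop :=
  forall e, e \in E -> #|e| = 3.

Definition has_berge_K4 (V : finType) (E : {set {set V}}) : Prop :=
  exists (f : 'I_4 -> V) (g : 'I_4 -> 'I_4 -> {set V}),
    injective f /\
    (forall i j : 'I_4, i < j -> [/\ g i j \in E, f i \in g i j & f j \in g i j]) /\
    (forall i j i' j' : 'I_4, i < j -> i' < j' -> g i j = g i' j' -> i = i' /\ j = j').

Definition berge_K4_saturated (V : finType) (E : {set {set V}}) : Prop :=
  [/\ uniform3 E, ~ has_berge_K4 E &
      forall e : {set V}, #|e| = 3 -> e \notin E -> has_berge_K4 (e |: E)].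

(* H plus k copies of T on (u,v): new vertices inr (i,false), inr (i,true)
   (= a_1^i, a_2^i) and hyperedges a_1^i a_2^i u, a_1^i a_2^i v. *)
Definition add_T_copies (V : finType) (E : {set {set V}}) (k : nat) (u v : V)
  : {set {set (V + ('I_k * bool))}} :=
  (fun e : {set V} => (@inl V ('I_k * bool)) @: e) @: E
  :|: [set [set inr (i, false); inr (i, true); inl u] | i : 'I_k]
  :|: [set [set inr (i, false); inr (i, true); inl v] | i : 'I_k].

Definition T_addable (V : finType) (E : {set {set V}}) (u v : V) : Prop :=
  berge_K4_saturated (add_T_copies E 1 u v).

(* H plus T on (u,v) and T on (u',v'): new vertices inr 0..inr 3 = a_1..a_4. *)
Definition add_two_T (V : finType) (E : {set {set V}}) (u v u' v' : V)
  : {set {set (V + 'I_4)}} :=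
  let a := fun n : nat => @inr V 'I_4 (inord n) in
  (fun e : {set V} => (@inl V 'I_4) @: e) @: E
  :|: [set [set a 0; a 1; inl u]; [set a 0; a 1; inl v];
           [set a 2; a 3; inl u']; [set a 2; a 3; inl v']].

(* Main.v *)
Require Import Defs.
From mathcomp Require Import all_boot.
Set Implicit Arguments. Unset Strict Implicit. Unset Printing Implicit Defensive.

Definition isK4 (W : finType) (F : {set {set W}}) (f : 'I_4 -> W) (g : 'I_4 -> 'I_4 -> {set W}) :=
    injective f /\
    (forall i j : 'I_4, i < j -> [/\ g i j \in F, f i \in g i j & f j \in g i j]) /\
    (forall i j i' j' : 'I_4, i < j -> i' < j' -> g i j = g i' j' -> i = i' /\ j = j').

Lemma size_le_card (T : finType) (s : seq T) (S : {set T}) :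
  uniq s -> {subset s <= S} -> size s <= #|S|.
Proof.
move=> us sub; rewrite -(card_uniqP us); apply: subset_leq_card; exact/subsetP.
Qed.

Ltac nt := let H1 := fresh in let H2 := fresh in case=> H1 H2; subst;
  match goal with H : is_true (?x != ?x) |- _ => by rewrite eqxx in H end.

Section K4.
Variables (W : finType) (F : {set {set W}}) (f : 'I_4 -> W) (g : 'I_4 -> 'I_4 -> {set W}).
Hypothesis K : isK4 F f g.

Definition G (i j : 'I_4) := if i < j then g i j else g j i.

Lemma GP i j : i != j -> [/\ G i j \in F, f i \in G i j & f j \in G i j].
Proof.
case: K => _ [gP _] ij; rewrite /G; case: ltngtP => h.
- exact: gP.
- by have [? ? ?] := gP _ _ h.
- by move: ij; rewrite (val_inj h) eqxx.
Qed.

Lemma GI i j i' j' : i != j -> i' != j' -> G i j = G i' j' ->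
  (i = i' /\ j = j') \/ (i = j' /\ j = i').
Proof.
case: K => _ [_ gI] ij ij'; rewrite /G.
case: (ltngtP i j) => h; last by move: ij; rewrite (val_inj h) eqxx.
- case: (ltngtP i' j') => h'; last by move: ij'; rewrite (val_inj h') eqxx.
  + by move/(gI _ _ _ _ h h'); left.
  + by move/(gI _ _ _ _ h h') => [? ?]; right.
- case: (ltngtP i' j') => h'; last by move: ij'; rewrite (val_inj h') eqxx.
  + by move/(gI _ _ _ _ h h') => [? ?]; right.
  + by move/(gI _ _ _ _ h h') => [? ?]; left.
Qed.

Lemma Gne i j i' j' : i != j -> i' != j' -> ~ (i = i' /\ j = j') -> ~ (i = j' /\ j = i') ->
  G i j != G i' j'.
Proof.
move=> ij ij' n1 n2; apply/eqP => /(GI ij ij') [] //.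
Qed.

Lemma others3 (c : 'I_4) : exists d1 d2 d3 : 'I_4, uniq [:: c; d1; d2; d3].
Proof.
pose o0 := Ordinal (isT : 0 < 4); pose o1 := Ordinal (isT : 1 < 4);
pose o2 := Ordinal (isT : 2 < 4); pose o3 := Ordinal (isT : 3 < 4).
case: c => [[|[|[|[|?]]]] ?] //.
- by exists o1, o2, o3.
- by exists o0, o2, o3.
- by exists o0, o1, o3.
- by exists o0, o1, o2.
Qed.

Lemma others2 (c d : 'I_4) : c != d -> exists k l : 'I_4, uniq [:: c; d; k; l].
Proof.
pose o0 := Ordinal (isT : 0 < 4); pose o1 := Ordinal (isT : 1 < 4);
pose o2 := Ordinal (isT : 2 < 4); pose o3 := Ordinal (isT : 3 < 4).
case: c => [[|[|[|[|?]]]] ?] //; case: d => [[|[|[|[|?]]]] ?] //.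
all: first [ by exists o0, o1 | by exists o0, o2 | by exists o0, o3
           | by exists o1, o2 | by exists o1, o3 | by exists o2, o3 ].
Qed.

Lemma deg2 c (S : {set {set W}}) :
  (forall x, x \in F -> f c \in x -> x \in S) -> #|S| <= 2 -> False.
Proof.
move=> sub cS; have [d1 [d2 [d3]]] := others3 c.
rewrite /= !inE !negb_or => /and4P [/and3P [cd1 cd2 cd3] /andP [d12 d13] d23 _].
have := size_le_card (s := [:: G c d1; G c d2; G c d3]) (S := S).
rewrite /= !inE !negb_or !Gne //; try nt.
move=> /(_ isT) H; suff : 2 < #|S| by rewrite ltnNge cS.
apply: H => x; rewrite !inE => /or3P [] /eqP ->;
  [case: (GP cd1) | case: (GP cd2) | case: (GP cd3)] => *; exact: sub.
Qed.

Lemma deg3 c d (S : {set {set W}}) : c != d ->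
  (forall x, x \in F -> (f c \in x) || (f d \in x) -> x \in S) -> #|S| <= 3 -> False.
Proof.
move=> cd sub cS; have [k [l]] := others2 cd.
rewrite /= !inE !negb_or => /and4P [/and3P [_ ck cl] /andP [dk dl] kl _].
have := size_le_card (s := [:: G c d; G c k; G c l; G d k; G d l]) (S := S).
rewrite /= !inE !negb_or !Gne //; try nt.
move=> /(_ isT) H; suff : 4 < #|S| by rewrite ltnNge (leq_trans cS).
apply: H => x; rewrite !inE => /orP [|/orP [|/orP [|/orP []]]] /eqP ->;
  [case: (GP cd) | case: (GP ck) | case: (GP cl) | case: (GP dk) | case: (GP dl)] => ? ? ?;
  apply: sub => //; apply/orP; by [left | right].
Qed.
End K4.

Lemma K4E (W : finType) (F : {set {set W}}) :
  has_berge_K4 F <-> exists f g, isK4 F f g.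
Proof. by []. Qed.

Lemma K4_push (W W' : finType) (phi : W -> W') (F : {set {set W}}) (F' : {set {set W'}}) :
  injective phi -> (forall x, x \in F -> phi @: x \in F') ->
  has_berge_K4 F -> has_berge_K4 F'.
Proof.
move=> phiI FF' [f [g [fI [gP gI]]]].
exists (phi \o f), (fun i j => phi @: g i j); split; first exact: inj_comp.
split=> [i j ij|i j i' j' ij ij' e]; last first.
  by apply: gI => //; apply: (imset_inj phiI).
have [? ? ?] := gP i j ij; split => /=; [exact: FF' | exact: imset_f..].
Qed.

Lemma preim_inl (V X : finType) (h : {set V}) :
  (@inl V X) @^-1: ((@inl V X) @: h) = h.
Proof. by apply/setP => x; rewrite inE mem_imset // => ? ? [].  Qed.

Lemma K4_pull (V X : finType) (E : {set {set V}}) (F : {set {set (V + X)}}) f g :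
  isK4 F f g -> (forall c, exists w, f c = inl w) ->
  (forall i j : 'I_4, i < j -> exists2 h, h \in E & g i j = inl @: h) -> has_berge_K4 E.
Proof.
move=> [fI [gP gI]] fl gl.
have [w0 _] := fl ord0.
pose f' c := if f c is inl w then w else w0.
have ff' c : f c = inl (f' c) by rewrite /f'; have [w ->] := fl c.
pose g' (i j : 'I_4) := (@inl V X) @^-1: g i j.
have gg' (i j : 'I_4) : i < j -> g i j = inl @: g' i j /\ g' i j \in E.
  by move=> ij; rewrite /g'; have [h hE ->] := gl i j ij; rewrite preim_inl.
exists f', g'; split.
  by move=> i j e; apply: fI; rewrite !ff' e.
split=> [i j ij|i j i' j' ij ij' e].
  have [? ? ?] := gP i j ij; have [_ ?] := gg' i j ij.
  by split => //; rewrite inE -ff'.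
apply: gI => //; have [-> _] := gg' i j ij; have [-> _] := gg' i' j' ij'.
by rewrite e.
Qed.

Lemma card3 (T : finType) (x y z : T) : x != y -> x != z -> y != z -> #|[set x; y; z]| = 3.
Proof.
move=> xy xz yz; rewrite setUC cardsU1 cards2 xy !inE negb_or.
by rewrite eq_sym xz eq_sym yz.
Qed.

Lemma card3le (T : finType) (x y z : T) : #|[set x; y; z]| <= 3.
Proof. by rewrite setUC cardsU1 cards2; case: (_ \notin _); case: (_ != _). Qed.

Definition TA (V : finType) (k : nat) (i : 'I_k) (u : V) : {set V + ('I_k * bool)} :=
  [set inr (i, false); inr (i, true); inl u].

Lemma inl_TA (V : finType) k (i : 'I_k) (u x : V) : (inl x \in TA i u) = (x == u).
Proof. by rewrite !inE. Qed.

Lemma inr_TA (V : finType) k (i j : 'I_k) (u : V) b : (inr (j, b) \in TA i u) = (j == i).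
Proof.
have H (a c : 'I_k * bool) : (inr a == inr c :> V + ('I_k*bool)) = (a == c) by [].
have H' (a : 'I_k * bool) : (inr a == inl u :> V + ('I_k*bool)) = false by [].
by rewrite !inE !H H' !xpair_eqE; case: b; case: (j == i).
Qed.

Lemma inr_inl (V X : finType) (h : {set V}) (y : X) : (inr y \in (@inl V X) @: h) = false.
Proof. by apply/negP => /imsetP [? ? ?]. Qed.

Lemma inl_inl (V X : finType) (h : {set V}) (y : V) : (inl y \in (@inl V X) @: h) = (y \in h).
Proof. by rewrite mem_imset // => ? ? []. Qed.

Lemma mem_addT (V : finType) (E : {set {set V}}) k (u v : V) x :
  x \in add_T_copies E k u v ->
  [\/ exists2 h, h \in E & x = inl @: h, exists i, x = TA i u | exists i, x = TA i v].
Proof.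
rewrite !inE => /orP [/orP [] | ] /imsetP [y yin ->].
- by constructor 1; exists y.
- by constructor 2; exists y.
- by constructor 3; exists y.
Qed.

Lemma TA_addT (V : finType) (E : {set {set V}}) k (u v : V) i :
  (TA i u \in add_T_copies E k u v) && (TA i v \in add_T_copies E k u v).
Proof.
rewrite !inE; apply/andP; split; apply/orP; [left; apply/orP; right | right];
  by apply/imsetP; exists i.
Qed.

Lemma inl_addT (V : finType) (E : {set {set V}}) k (u v : V) h :
  h \in E -> inl @: h \in add_T_copies E k u v.
Proof. by move=> hE; rewrite !inE; apply/orP; left; apply/orP; left; apply/imsetP; exists h. Qed.

Lemma TA_two_inl (V : finType) k (i : 'I_k) (z x y : V) :
  inl x \in TA i z -> inl y \in TA i z -> x = y.
Proof. by rewrite !inl_TA => /eqP -> /eqP ->. Qed.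

Lemma noK4_addT (V : finType) (E : {set {set V}}) k (u v : V) :
  ~ has_berge_K4 E -> u != v -> ~ has_berge_K4 (add_T_copies E k u v).
Proof.
move=> nE uv [f [g K]]; have [fI [gP gI]] := K.
have fl c : exists w, f c = inl w.
  case E1: (f c) => [w|[i b]]; first by exists w.
  exfalso; apply: (deg2 K (c := c) (S := [set TA i u; TA i v])); last by rewrite cards2; case: (_ != _).
  move=> x /mem_addT [[h _ ->]|[j ->]|[j ->]]; rewrite E1 ?inr_inl // inr_TA => /eqP ->;
  by rewrite !inE eqxx ?orbT.
apply: nE; apply: (K4_pull K fl) => i j ij.
have [gin fi fj] := gP i j ij.
have [wi ei] := fl i; have [wj ej] := fl j.
have wij : wi != wj.
  apply/eqP => e; have ije : i = j by apply: fI; rewrite ei ej e.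
  by rewrite ije ltnn in ij.
rewrite ei in fi; rewrite ej in fj.
case/mem_addT: gin => [[h hE ->]|[l el]|[l el]]; first by exists h.
- by rewrite el in fi fj; move: wij; rewrite (TA_two_inl fi fj) eqxx.
- by rewrite el in fi fj; move: wij; rewrite (TA_two_inl fi fj) eqxx.
Qed.

Lemma pig3 (T : finType) (s : seq T) (S : {set T}) :
  uniq s -> size s = 3 -> {subset s <= S} -> #|S| <= 3 -> {subset S <= s}.
Proof.
move=> us ss sub cS y yS; apply/negPn/negP => ys.
have : size s <= #|S :\ y|.
  apply: size_le_card => // x xs; rewrite !inE sub // andbT.
  by apply/eqP => xy; move: ys; rewrite -xy xs.
rewrite ss => H; move: cS; rewrite (cardsD1 y) yS /= ltnS => H'.
by have := leq_trans H H'.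
Qed.

Definition isl (V X : Type) (x : V + X) := if x is inl _ then true else false.

Lemma ord1E (i : 'I_1) : i = ord0.
Proof. by apply: val_inj; case: i => [[]]. Qed.

Lemma h0_exists (V : finType) (E : {set {set V}}) (u v : V) :
  uniform3 E -> ~ has_berge_K4 E -> u != v -> T_addable E u v ->
  exists2 h, h \in E & (u \in h) && (v \in h).
Proof.
move=> U nE uv [U1 nK1 sat1].
pose o : 'I_1 := ord0.
have [/existsP [w /andP [wu wv]] | /existsPn nw] := boolP [exists w, (w != u) && (w != v)].
  pose e : {set V + ('I_1 * bool)} := TA o w.
  have ce : #|e| = 3 by rewrite card3.
  have ne : e \notin add_T_copies E 1 u v.
    apply/negP => /mem_addT [[h _ eh]|[i ei]|[i ei]].
    - have : inr (o, false) \in e by rewrite /e inr_TA.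
      by rewrite eh inr_inl.
    - have : inl w \in e by rewrite inl_TA.
      by rewrite ei inl_TA (negbTE wu).
    - have : inl w \in e by rewrite inl_TA.
      by rewrite ei inl_TA (negbTE wv).
  have [f [g K]] := sat1 e ce ne; have [fI [gP gI]] := K.
  have memE x : x \in e |: add_T_copies E 1 u v ->
      (exists2 h, h \in E & x = inl @: h) \/ exists z, (x = TA o z) /\ (z \in [set u; v; w]).
    rewrite in_setU1 => /orP [/eqP ->| /mem_addT [?|[i ->]|[i ->]]]; first 2 [by left];
      right; rewrite ?(ord1E i).
    + by exists w; rewrite !inE eqxx !orbT.
    + by exists u; rewrite !inE eqxx.
    + by exists v; rewrite !inE eqxx !orbT.
  have [/forallP fl | /forallPn [c fc]] := boolP [forall c, isl (f c)].
    have fl' c : exists w, f c = inl w by move: (fl c); case: (f c) => // z; exists z.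
    exfalso; apply: nE; apply: (K4_pull K fl') => i j ij.
    have [gin fi fj] := gP i j ij.
    have [wi ei] := fl' i; have [wj ej] := fl' j.
    have wij : wi != wj.
      apply/eqP => e'; have ije : i = j by apply: fI; rewrite ei ej e'.
      by rewrite ije ltnn in ij.
    rewrite ei in fi; rewrite ej in fj.
    case/memE: gin => [//|[z [gz _]]].
    by rewrite gz in fi fj; move: wij; rewrite (TA_two_inl fi fj) eqxx.
  case Ec: (f c) fc => [//|[i0 b0]] _.
  rewrite (ord1E i0) in Ec.
  pose S := [set TA o u; TA o v; TA o w].
  have inS x b : x \in e |: add_T_copies E 1 u v -> inr (o, b) \in x -> x \in S.
    case/memE => [[h _ ->]|[z [-> zin]]]; first by rewrite inr_inl.
    move=> _; move: zin; rewrite !inE => /orP [/orP []|] /eqP ->; by rewrite eqxx ?orbT.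
  have nb d : c != d -> f d \in [set inl u; inl v; inl w].
    move=> cd; case Ed: (f d) => [z|[i1 b1]].
      have [Gin fcG fdG] := GP K cd.
      rewrite Ec in fcG; rewrite Ed in fdG.
      case/memE: Gin fcG fdG => [[h _ ->]|[z' [-> zin]]]; first by rewrite inr_inl.
      by move=> _; rewrite inl_TA => /eqP ->; move: zin; rewrite !inE.
    exfalso; apply: (deg3 K cd (S := S)); last exact: card3le.
    move=> x xin; rewrite Ec Ed (ord1E i1) => /orP []; exact: inS.
  have [d1 [d2 [d3 ud]]] := others3 c.
  have sub : {subset [:: f d1; f d2; f d3] <= [set inl u; inl v; inl w]}.
    move: (ud); rewrite /= !inE !negb_or => /and4P [/and3P [cd1 cd2 cd3] _ _ _].
    by move=> x; rewrite !in_cons in_nil orbF => /or3P [] /eqP ->; apply: nb.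
  have us : uniq [:: f d1; f d2; f d3].
    have -> : [:: f d1; f d2; f d3] = map f [:: d1; d2; d3] by [].
    by rewrite (map_inj_uniq fI); move: ud => /andP [].
  have P3 := pig3 us erefl sub (card3le _ _ _).
  have mu : inl u \in [set inl u; inl v; inl w : V + ('I_1 * bool)] by rewrite !inE eqxx.
  have mv : inl v \in [set inl u; inl v; inl w : V + ('I_1 * bool)] by rewrite !inE eqxx orbT.
  have := P3 _ mu; have := P3 _ mv.
  rewrite -[[:: f d1; f d2; f d3]]/(map f [:: d1; d2; d3]).
  move=> /mapP [dv _ ev] /mapP [du _ eu].
  have duv : du != dv.
    apply/eqP => E'; move: uv; rewrite E' in eu; rewrite -eu in ev.
    by case: ev => ->; rewrite eqxx.
  have [Gin fuG fvG] := GP K duv.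
  rewrite -eu in fuG; rewrite -ev in fvG.
  case/memE: Gin fuG fvG => [[h hE ->]|[z [-> _]]].
    by rewrite !inl_inl => ? ?; exists h => //; apply/andP.
  by move=> a b; move: uv; rewrite (TA_two_inl a b) eqxx.
have E0 h : h \in E -> False.
  move=> hE; have := U h hE => ch.
  have : #|h| <= #|[set u; v]|.
    apply: subset_leq_card; apply/subsetP => x _; have := nw x.
    by rewrite negb_and !negbK !inE orbC.
  by rewrite ch cards2; case: (_ != _).
pose e : {set V + ('I_1 * bool)} := [set inr (o, false); inl u; inl v].
have ce : #|e| = 3 by rewrite card3 //; apply: contra uv => /eqP [->].
have ne : e \notin add_T_copies E 1 u v.
  apply/negP => /mem_addT [[h hE _]|[i ei]|[i ei]]; first exact: E0 hE.
  - have : inr (o, true) \in TA i u by rewrite inr_TA (ord1E i).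
    by rewrite -ei !inE.
  - have : inr (o, true) \in TA i v by rewrite inr_TA (ord1E i).
    by rewrite -ei !inE.
have [f [g K]] := sat1 e ce ne.
exfalso; apply: (deg3 K (c := ord0) (d := ord_max) isT (S := [set e; TA o u; TA o v])).
  move=> x; rewrite in_setU1 => /orP [/eqP -> _|]; first by rewrite !inE eqxx.
  case/mem_addT => [[h hE _]|[i ->]|[i ->]]; first by case: (E0 _ hE).
  + by rewrite (ord1E i) !inE eqxx orbT.
  + by rewrite (ord1E i) !inE eqxx orbT.
exact: card3le.
Qed.

Definition psi (V : finType) k (i : 'I_k) (y : V + ('I_1 * bool)) : V + ('I_k * bool) :=
  match y with inl w => inl w | inr (_, b) => inr (i, b) end.

Lemma psi_inj (V : finType) k (i : 'I_k) : injective (@psi V k i).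
Proof.
move=> [w|[o b]] [w'|[o' b']] //=; first by case=> ->.
by case=> ->; rewrite (ord1E o) (ord1E o').
Qed.

Lemma psi_TA (V : finType) k (i : 'I_k) (z : V) : psi i @: TA ord0 z = TA i z.
Proof. by rewrite /TA !imsetU !imset_set1. Qed.

Lemma psi_inl (V : finType) k (i : 'I_k) (h : {set V}) :
  psi i @: ((@inl V ('I_1 * bool)) @: h) = inl @: h.
Proof. by rewrite -imset_comp; apply: eq_imset. Qed.

Lemma psi_edges (V : finType) (E : {set {set V}}) k (u v : V) (i : 'I_k) x :
  x \in add_T_copies E 1 u v -> psi i @: x \in add_T_copies E k u v.
Proof.
case/mem_addT => [[h hE ->]|[o ->]|[o ->]]; rewrite ?(ord1E o) ?psi_TA ?psi_inl.
- exact: inl_addT.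
- by case/andP: (TA_addT E u v i).
- by case/andP: (TA_addT E u v i).
Qed.

Definition diffc (V : Type) k (x y : V + ('I_k * bool)) :=
  match x, y with inr (i, _), inr (j, _) => i != j | _, _ => false end.

Lemma sat_addT (V : finType) (E : {set {set V}}) k (u v : V) :
  berge_K4_saturated E -> u != v -> T_addable E u v ->
  forall e : {set V + ('I_k * bool)}, #|e| = 3 -> e \notin add_T_copies E k u v ->
  has_berge_K4 (e |: add_T_copies E k u v).
Proof.
move=> [U nE satE] uv TAd e ce ne.
have [h0 h0E /andP [uh0 vh0]] := h0_exists U nE uv TAd.
have [/existsP [x /andP [xe /existsP [y /andP [ye dxy]]]] | /existsPn nd] :=
  boolP [exists x, (x \in e) && [exists y, (y \in e) && diffc x y]].
  case: x xe dxy => [//|[i b]] xe; case: y ye => [? _ | [j c0] ye] //= ij.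
  pose f (c : 'I_4) : V + ('I_k * bool) :=
    match val c with 0 => inr (i, b) | 1 => inr (j, c0) | 2 => inl u | _ => inl v end.
  pose g (p q : 'I_4) : {set V + ('I_k * bool)} :=
    match val p, val q with
    | 0, 1 => e | 0, 2 => TA i u | 0, 3 => TA i v | 1, 2 => TA j u | 1, 3 => TA j v
    | _, _ => inl @: h0 end.
  have TAu l : TA l u \in e |: add_T_copies E k u v.
    by rewrite in_setU1; case/andP: (TA_addT E u v l) => -> _; rewrite orbT.
  have TAv l : TA l v \in e |: add_T_copies E k u v.
    by rewrite in_setU1; case/andP: (TA_addT E u v l) => _ ->; rewrite orbT.
  have h0in : inl @: h0 \in e |: add_T_copies E k u v.
    by rewrite in_setU1 inl_addT ?orbT.
  have ji : (j == i) = false by apply/negbTE; rewrite eq_sym.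
  have ij' : (i == j) = false by apply/negbTE.
  have vu : (v == u) = false by apply/negbTE; rewrite eq_sym.
  have uv' : (u == v) = false by apply/negbTE.
  exists f, g; split; last split.
  { move=> p q; rewrite /f; case: p q => [[|[|[|[|?]]]] Hp] [[|[|[|[|?]]]] Hq] //=;
      try (by move=> _; apply: val_inj); try (by case).
    all: case=> E'; first [by move: ij; rewrite E' eqxx | by move: uv; rewrite E' eqxx
                          | by move: ij; rewrite -E' eqxx | by move: uv; rewrite -E' eqxx]. }
  { move=> p q; rewrite /f /g; case: p q => [[|[|[|[|?]]]] Hp] [[|[|[|[|?]]]] Hq] //= _.
    all: split; rewrite ?setU11 ?TAu ?TAv ?h0in ?xe ?ye ?inr_TA ?inl_TA ?inl_inl ?eqxx //. }
  { move=> p q p' q'; rewrite /g;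
      case: p q p' q' => [[|[|[|[|?]]]] Hp] [[|[|[|[|?]]]] Hq] [[|[|[|[|?]]]] Hp'] [[|[|[|[|?]]]] Hq'] //= _ _;
      try (by move=> _; split; apply: val_inj).
    all: move=> /setP H; move: (H (inr (i, b))) (H (inr (j, c0))) (H (inl u)).
    all: rewrite ?inr_TA ?inl_TA ?inr_inl ?inl_inl ?xe ?ye ?uh0 ?eqxx ?ji ?ij' ?vu ?uv'.
    all: move=> *; congruence. }
have [/existsP [x /andP [xe xr]] | /existsPn nr] := boolP [exists x, (x \in e) && ~~ isl x].
  case: x xe xr => [//|[i b]] xe _.
  have same j c : inr (j, c) \in e -> j = i.
    move=> jc; have := nd (inr (j,c)); rewrite jc /=; move/existsPn/(_ (inr (i,b))).
    by rewrite xe /= negbK => /eqP.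
  pose e1 := psi i @^-1: e.
  have ee1 : e = psi i @: e1.
    apply/setP => y; apply/idP/imsetP => [ye|[z ze ->]]; last by rewrite inE in ze.
    case: y ye => [w|[j c]] ye.
      by exists (inl w); rewrite ?inE.
    have ji := same _ _ ye; subst j.
    by exists (inr (ord0, c)); rewrite ?inE.
  have ce1 : #|e1| = 3 by rewrite -ce ee1 card_imset //; exact: psi_inj.
  have ne1 : e1 \notin add_T_copies E 1 u v.
    by apply: contra ne => /(@psi_edges V E k u v i); rewrite -ee1.
  case: TAd => _ _ sat1.
  apply: (K4_push (@psi_inj V k i) _ (sat1 _ ce1 ne1)).
  move=> z; rewrite in_setU1 => /orP [/eqP -> | zE]; first by rewrite -ee1 setU11.
  by rewrite in_setU1 psi_edges ?orbT.
pose e0 := (@inl V ('I_k * bool)) @^-1: e.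
have ee0 : e = inl @: e0.
  apply/setP => y; apply/idP/imsetP => [ye|[z ze ->]]; last by rewrite inE in ze.
  case: y ye => [w|y'] ye; first by exists w; rewrite ?inE.
  by have := nr (inr y'); rewrite ye.
have ce0 : #|e0| = 3 by rewrite -ce ee0 card_imset // => ? ? [].
have ne0 : e0 \notin E by apply: contra ne => e0E; rewrite ee0; exact: inl_addT.
apply: (K4_push (phi := inl) _ _ (satE _ ce0 ne0)); first by move=> ? ? [].
move=> z; rewrite in_setU1 => /orP [/eqP -> | zE]; first by rewrite -ee0 setU11.
by rewrite in_setU1 inl_addT ?orbT.
Qed.

Lemma TA_card (V : finType) k (i : 'I_k) (z : V) : #|TA i z| = 3.
Proof.
have H (a c : 'I_k * bool) : (inr a == inr c :> V + ('I_k*bool)) = (a == c) by [].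
by rewrite card3 // H xpair_eqE andbF.
Qed.

Lemma U_addT (V : finType) (E : {set {set V}}) k (u v : V) :
  uniform3 E -> uniform3 (add_T_copies E k u v).
Proof.
move=> U x /mem_addT [[h hE ->]|[i ->]|[i ->]].
- by rewrite card_imset ?U // => ? ? [].
- exact: TA_card.
- exact: TA_card.
Qed.

Definition aa (V : finType) (n : nat) : V + 'I_4 := inr (inord n).

Lemma aa_eq (V : finType) n m : n < 4 -> m < 4 -> (aa V n == aa V m) = (n == m).
Proof.
move=> n4 m4; rewrite /aa; apply/eqP/eqP => [[]|-> //].
by move/(congr1 val); rewrite /= !inordK.
Qed.

Lemma aa_inl (V : finType) n (x : V) : ((aa V n == inl x) = false) * ((inl x == aa V n) = false).
Proof. by []. Qed.

Lemma aa_cover (V : finType) (y : 'I_4) :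
  [\/ inr y = aa V 0, inr y = aa V 1, inr y = aa V 2 | inr y = aa V 3].
Proof.
rewrite /aa; case: y => [[|[|[|[|?]]]] H] //.
- by constructor 1; congr inr; apply: val_inj; rewrite /= inordK.
- by constructor 2; congr inr; apply: val_inj; rewrite /= inordK.
- by constructor 3; congr inr; apply: val_inj; rewrite /= inordK.
- by constructor 4; congr inr; apply: val_inj; rewrite /= inordK.
Qed.

Lemma set2_eq (T : finType) (x y a b : T) : x != y ->
  (x == a) || (x == b) -> (y == a) || (y == b) -> [set a; b] = [set x; y].
Proof.
move=> xy /orP [] /eqP ? /orP [] /eqP ?; subst => //;
  first [by rewrite eqxx in xy | by rewrite setUC].
Qed.

Lemma inlE (V X : eqType) (a b : V) : (inl a == inl b :> V + X)%type = (a == b).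
Proof. by []. Qed.

Lemma part2 (V : finType) (E : {set {set V}}) (u v u' v' : V) :
  u != v -> u' != v' -> [set u; v] != [set u'; v'] ->
  ~ berge_K4_saturated (add_two_T E u v u' v').
Proof.
move=> uv uv' nsame [U' nK' sat'].
set F := add_two_T E u v u' v'.
pose A : {set V + 'I_4} := [set aa V 0; aa V 1; inl u].
pose B : {set V + 'I_4} := [set aa V 0; aa V 1; inl v].
pose C : {set V + 'I_4} := [set aa V 2; aa V 3; inl u'].
pose D : {set V + 'I_4} := [set aa V 2; aa V 3; inl v'].
pose e : {set V + 'I_4} := [set aa V 0; aa V 1; aa V 2].
have memF x : x \in F -> (exists2 h, h \in E & x = inl @: h) \/ [\/ x = A, x = B, x = C | x = D].
  rewrite /F /add_two_T !inE => /orP [/imsetP [h hE ->]|]; first by left; exists h.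
  by move=> /orP [/orP [/orP [] |] |] /eqP ->; right; [constructor 1|constructor 2|constructor 3|constructor 4].
have memE x : x \in e |: F -> [\/ x = e, exists2 h, h \in E & x = inl @: h, x = A \/ x = B | x = C \/ x = D].
  rewrite in_setU1 => /orP [/eqP ->|/memF [?|[] ->]]; first by constructor 1.
  - by constructor 2.
  - by constructor 3; left.
  - by constructor 3; right.
  - by constructor 4; left.
  - by constructor 4; right.
have ce : #|e| = 3 by rewrite card3 ?aa_eq.
have ne : e \notin F.
  apply/negP => /memF [[h _ eh]|[] ea].
  - have : aa V 0 \in e by rewrite !inE eqxx.
    by rewrite eh /aa inr_inl.
  - have : inl u \in A by rewrite !inE eqxx orbT.
    by rewrite -ea !inE !aa_inl.
  - have : inl v \in B by rewrite !inE eqxx orbT.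
    by rewrite -ea !inE !aa_inl.
  - have : inl u' \in C by rewrite !inE eqxx orbT.
    by rewrite -ea !inE !aa_inl.
  - have : inl v' \in D by rewrite !inE eqxx orbT.
    by rewrite -ea !inE !aa_inl.
have [f [g K]] := sat' e ce ne; have [fI [gP gI]] := K.
have [/existsP [i /existsP [j /andP [ij /eqP gij]]] | /existsPn nex] :=
  boolP [exists i : 'I_4, exists j : 'I_4, (i < j) && (g i j == e)]; last first.
  apply: nK'; exists f, g; split => //; split => // i j ij.
  have [gin fi fj] := gP i j ij; split => //.
  move: gin; rewrite in_setU1 => /orP [/eqP gie|//].
  by move: (nex i) => /existsPn /(_ j); rewrite ij gie eqxx.
have [_ fi fj] := gP i j ij; rewrite gij in fi fj.
have ijn : i != j by rewrite neq_ltn ij.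
have deg_a3 c : f c = aa V 3 -> False.
  move=> fc; apply: (deg2 K (c := c) (S := [set C; D])); last by rewrite cards2; case: (_ != _).
  move=> x /memE [-> | [h _ ->] | [] -> | [] ->]; rewrite fc.
  - by rewrite !inE !aa_eq.
  - by rewrite /aa inr_inl.
  - by rewrite !inE !aa_eq ?aa_inl.
  - by rewrite !inE !aa_eq ?aa_inl.
  - by move=> _; rewrite !inE eqxx.
  - by move=> _; rewrite !inE eqxx orbT.
have a01 x : x \in e |: F -> (aa V 0 \in x) || (aa V 1 \in x) -> x \in [set e; A; B].
  move=> /memE [-> | [h _ ->] | [] -> | [] ->].
  - by move=> _; rewrite !inE eqxx.
  - by rewrite /aa !inr_inl.
  - by move=> _; rewrite !inE eqxx !orbT.
  - by move=> _; rewrite !inE eqxx !orbT.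
  - by rewrite !inE !aa_eq ?aa_inl.
  - by rewrite !inE !aa_eq ?aa_inl.
have deg_a01 c d : c != d -> (f c == aa V 0) || (f c == aa V 1) ->
    (f d == aa V 0) || (f d == aa V 1) -> False.
  move=> cd fc fd; apply: (deg3 K cd (S := [set e; A; B])); last exact: card3le.
  move=> x xin /orP [] xc; apply: a01 => //.
  - by case/orP: fc xc => /eqP -> ->; rewrite ?orbT.
  - by case/orP: fd xc => /eqP -> ->; rewrite ?orbT.
have [c2 [c01 [c21 fc2 fc01]]] : exists c2 c01, [/\ c2 != c01, f c2 = aa V 2 &
    (f c01 == aa V 0) || (f c01 == aa V 1)].
  move: fi fj; rewrite !inE => /orP [fi|/eqP fi] /orP [fj|/eqP fj].
  - by case: (deg_a01 _ _ ijn fi fj).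
  - by exists j, i; rewrite eq_sym.
  - by exists i, j.
  - by move: ijn; rewrite (fI i j) ?fi ?fj ?eqxx.
have nbr d : c2 != d -> c01 != d -> exists w, [/\ f d = inl w, (w == u) || (w == v) &
    (w == u') || (w == v')].
  move=> c2d c01d; case Ed: (f d) => [w|n]; last first.
    case: (aa_cover V n) => an; rewrite an in Ed.
    - by case: (deg_a01 _ _ c01d fc01); rewrite Ed eqxx.
    - by case: (deg_a01 _ _ c01d fc01); rewrite Ed eqxx orbT.
    - by move: c2d; rewrite (fI c2 d) ?eqxx // fc2 Ed.
    - by case: (deg_a3 _ Ed).
  exists w; split => //.
  - have [G1 f1 fd1] := GP K c01d; rewrite Ed in fd1.
    case/orP: fc01 f1 => /eqP ->.
    + case/memE: G1 fd1 => [-> | [h _ ->] | [] -> | [] ->].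
      * by rewrite !inE !aa_inl.
      * by rewrite /aa inr_inl.
      * by rewrite !inE !aa_inl !inlE /= => /eqP -> _; rewrite eqxx ?orbT.
      * by rewrite !inE !aa_inl !inlE /= => /eqP -> _; rewrite eqxx ?orbT.
      * by move=> _; rewrite !inE !aa_eq.
      * by move=> _; rewrite !inE !aa_eq.
    + case/memE: G1 fd1 => [-> | [h _ ->] | [] -> | [] ->].
      * by rewrite !inE !aa_inl.
      * by rewrite /aa inr_inl.
      * by rewrite !inE !aa_inl !inlE /= => /eqP -> _; rewrite eqxx ?orbT.
      * by rewrite !inE !aa_inl !inlE /= => /eqP -> _; rewrite eqxx ?orbT.
      * by move=> _; rewrite !inE !aa_eq.
      * by move=> _; rewrite !inE !aa_eq.
  - have [G1 f1 fd1] := GP K c2d; rewrite Ed in fd1; rewrite fc2 in f1.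
    case/memE: G1 fd1 f1 => [-> | [h _ ->] | [] -> | [] ->].
    * by rewrite !inE !aa_inl.
    * by rewrite /aa inr_inl.
    * by move=> _; rewrite !inE !aa_eq.
    * by move=> _; rewrite !inE !aa_eq.
    * by rewrite !inE !aa_inl !inlE /= => /eqP -> _; rewrite eqxx ?orbT.
    * by rewrite !inE !aa_inl !inlE /= => /eqP -> _; rewrite eqxx ?orbT.
have [k [l]] := others2 c21.
rewrite /= !inE !negb_or => /and4P [/and3P [_ c2k c2l] /andP [c01k c01l] kl _].
have [wk [ek uk uk']] := nbr k c2k c01k.
have [wl [el ul ul']] := nbr l c2l c01l.
have wkl : wk != wl by apply: contra kl => /eqP wkl; apply/eqP/fI; rewrite ek el wkl.
by move/negP: nsame; apply; apply/eqP; rewrite (set2_eq wkl uk ul) (set2_eq wkl uk' ul').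
Qed.

Theorem lemma2p1 (V : finType) (E : {set {set V}}) :
  berge_K4_saturated E ->
  (forall u v : V, u != v -> T_addable E u v ->
     forall k : nat, 0 < k -> berge_K4_saturated (add_T_copies E k u v)) /\
  (forall u v u' v' : V, u != v -> u' != v' -> [set u; v] != [set u'; v'] ->
     ~ berge_K4_saturated (add_two_T E u v u' v')).
Proof.
move=> HE; split.
  move=> u v uv TAd k _; have [U nE _] := HE; split.
  - exact: U_addT.
  - exact: noK4_addT.
  - exact: sat_addT.
move=> u v u' v' uv uv' ns; exact: part2.
Qed.
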